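(* Let $H$ be a real Hilbert space, $(T_n)_{n\in\mathbb{N}}$ a family of self-mappings of $H$ and $(\gamma_n)$ a sequence of positive reals. Then $(T_n)$ is jointly $(P_2)$ with respect to $(\gamma_n)$ if and only if $(T_n)$ is jointly firmly nonexpansive with respect to $(\gamma_n)$.
   Context: $(T_n)$ is jointly firmly nonexpansive w.r.t. $(\gamma_n)$ if for all $n,m\in\mathbb{N}$, $x,y\in H$, $\alpha,\beta\in[0,1]$ with $(1-\alpha)\gamma_n=(1-\beta)\gamma_m$: $\|T_nx-T_my\|\le\|((1-\alpha)x+\alpha T_nx)-((1-\beta)y+\beta T_my)\|$. $(T_n)$ is jointly $(P_2)$ w.r.t. $(\gamma_n)$ if for all $n,m$ and $x,y\in H$: $\frac1{\gamma_m}\big(\|T_nx-T_my\|^2+\|y-T_my\|^2-\|y-T_nx\|^2\big)\le\frac1{\gamma_n}\big(\|x-T_my\|^2-\|x-T_nx\|^2-\|T_nx-T_my\|^2\big)$. *)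

(* Defs.v *)
From HB Require Import structures.
From mathcomp Require Import all_boot all_order all_algebra.
From mathcomp Require Import all_classical all_reals all_analysis.
Set Implicit Arguments. Unset Strict Implicit. Unset Printing Implicit Defensive.
Import Order.TTheory GRing.Theory Num.Theory.
Import numFieldNormedType.Exports.
Local Open Scope ring_scope.

(* A real Hilbert space: a complete normed module H over R whose norm is
   induced by an inner product ip (symmetric, bilinear, <x,x> = ||x||^2). *)
Definition is_inner_product (R : realType) (H : completeNormedModType R)
  (ip : H -> H -> R) : Prop :=
  [/\ (forall x y, ip x y = ip y x),
      (forall a x y z, ip (a *: x + y) z = a * ip x z + ip y z)
    & (forall x, ip x x = `|x| ^+ 2)].

Definition jointly_firmly_nonexpansive (R : realType) (H : normedModType R)
  (T : nat -> H -> H) (gamma : nat -> R) : Prop :=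
  forall (n m : nat) (x y : H) (alpha beta : R),
    0 <= alpha <= 1 -> 0 <= beta <= 1 ->
    (1 - alpha) * gamma n = (1 - beta) * gamma m ->
    `|T n x - T m y| <=
      `|((1 - alpha) *: x + alpha *: T n x) - ((1 - beta) *: y + beta *: T m y)|.

Definition jointly_P2 (R : realType) (H : normedModType R)
  (T : nat -> H -> H) (gamma : nat -> R) : Prop :=
  forall (n m : nat) (x y : H),
    (gamma m)^-1 * (`|T n x - T m y| ^+ 2 + `|y - T m y| ^+ 2 - `|y - T n x| ^+ 2)
    <= (gamma n)^-1 * (`|x - T m y| ^+ 2 - `|x - T n x| ^+ 2 - `|T n x - T m y| ^+ 2).

(* Main.v *)
Require Import Defs.
From HB Require Import structures.
From mathcomp Require Import all_boot all_order all_algebra.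
From mathcomp Require Import all_classical all_reals all_analysis.
From mathcomp Require Import ring lra.
Import Order.TTheory GRing.Theory Num.Theory.
Import numFieldNormedType.Exports.
Local Open Scope ring_scope.

Section IP.
Variables (R : realType) (H : completeNormedModType R) (ip : H -> H -> R).
Hypothesis hip : is_inner_product ip.

Lemma ipS x y : ip x y = ip y x. Proof. by case: hip. Qed.
Lemma ipN x : ip x x = `|x| ^+ 2. Proof. by case: hip. Qed.
Lemma ipL a x y z : ip (a *: x + y) z = a * ip x z + ip y z. Proof. by case: hip => _ h _; apply: h. Qed.
Lemma ip0l z : ip 0 z = 0.
Proof. have := ipL 1 0 0 z; rewrite scaler0 addr0 mul1r => h. lra. Qed.
Lemma ipDl x y z : ip (x + y) z = ip x z + ip y z.
Proof. by rewrite -[x]scale1r ipL mul1r scale1r. Qed.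
Lemma ipZl a x z : ip (a *: x) z = a * ip x z.
Proof. by rewrite -[a *: x]addr0 ipL ip0l addr0. Qed.
Lemma ipNl x z : ip (- x) z = - ip x z.
Proof. by rewrite -scaleN1r ipZl mulN1r. Qed.
Lemma ipDr x y z : ip z (x + y) = ip z x + ip z y.
Proof. by rewrite ipS ipDl ipS [ip y z]ipS. Qed.
Lemma ipZr a x z : ip z (a *: x) = a * ip z x.
Proof. by rewrite ipS ipZl ipS. Qed.
Lemma ipNr x z : ip z (- x) = - ip z x.
Proof. by rewrite ipS ipNl ipS. Qed.

Ltac expand :=
  rewrite -!ipN ?(ipDl, ipDr, ipNl, ipNr, ipZl, ipZr);
  rewrite ?[ip _ _ ]ipS.

Lemma key1 (x y u v : H) (g h : R) :
  g^-1 * (`|x - v| ^+ 2 - `|x - u| ^+ 2 - `|u - v| ^+ 2)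
  - h^-1 * (`|u - v| ^+ 2 + `|y - v| ^+ 2 - `|y - u| ^+ 2)
  = 2 * ip (u - v) (g^-1 *: (x - u) - h^-1 *: (y - v)).
Proof.
rewrite -!ipN !(ipDl, ipDr, ipNl, ipNr, ipZl, ipZr).
rewrite ?(ipS y x) ?(ipS u x) ?(ipS v x) ?(ipS u y) ?(ipS v y) ?(ipS v u).
ring.
Qed.

Lemma key2 (x y u v : H) (g h c : R) :
  `|((1 - (1 - c * g^-1)) *: x + (1 - c * g^-1) *: u)
    - ((1 - (1 - c * h^-1)) *: y + (1 - c * h^-1) *: v)| ^+ 2
  = `|u - v| ^+ 2 + 2 * c * ip (u - v) (g^-1 *: (x - u) - h^-1 *: (y - v)) + c ^+ 2 * ip (g^-1 *: (x - u) - h^-1 *: (y - v)) (g^-1 *: (x - u) - h^-1 *: (y - v)).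
Proof.
rewrite -!ipN !(ipDl, ipDr, ipNl, ipNr, ipZl, ipZr).
rewrite ?(ipS y x) ?(ipS u x) ?(ipS v x) ?(ipS u y) ?(ipS v y) ?(ipS v u).
ring.
Qed.

End IP.

Theorem proposition3p14 (R : realType) (H : completeNormedModType R)
  (ip : H -> H -> R) (hip : is_inner_product ip)
  (T : nat -> H -> H) (gamma : nat -> R) (hgamma : forall n, 0 < gamma n) :
  jointly_P2 T gamma <-> jointly_firmly_nonexpansive T gamma.
Proof.
split.
- move=> hP n m x y al be /andP[ha0 ha1] /andP[hb0 hb1] he.
  set g := gamma n; set h := gamma m.
  have gp : 0 < g := hgamma n. have hp : 0 < h := hgamma m.
  set c := (1 - al) * g.
  have hal : al = 1 - c * g^-1 by rewrite /c mulfK ?gt_eqF //; ring.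
  have hbe : be = 1 - c * h^-1 by rewrite /c he mulfK ?gt_eqF //; ring.
  have c0 : 0 <= c by apply: mulr_ge0; [rewrite subr_ge0 | apply: ltW].
  move: (hP n m x y); rewrite -/g -/h => hP2.
  have := @key1 _ _ ip hip x y (T n x) (T m y) g h.
  have := @key2 _ _ ip hip x y (T n x) (T m y) g h c.
  set w := (g^-1 *: _ - _ : H).
  rewrite hal hbe.
  set F := `|_ - _ : H|. move=> k2 k1.
  have q0 : 0 <= ip w w by rewrite ipN // sqr_ge0.
  rewrite -(ler_pXn2r (n:=2)) // ?nnegrE ?normr_ge0 //.
  rewrite k2.
  have p0 : 0 <= ip (T n x - T m y) w by nra.
  have : 0 <= c * ip (T n x - T m y) w by apply: mulr_ge0.
  have : 0 <= c ^+ 2 * ip w w by apply: mulr_ge0 => //; apply: sqr_ge0.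
  lra.
- move=> hF n m x y.
  set g := gamma n; set h := gamma m.
  have gp : 0 < g := hgamma n. have hp : 0 < h := hgamma m.
  have := @key1 _ _ ip hip x y (T n x) (T m y) g h.
  set w := (g^-1 *: _ - _ : H).
  set p := ip _ w => k1.
  suff : 0 <= p by lra.
  have q0 : 0 <= ip w w by rewrite ipN // sqr_ge0.
  set q := ip w w in q0.
  rewrite leNgt; apply/negP => pn.
  have [c [c0 cg ch cq]] : exists c, [/\ 0 < c, c <= g, c <= h & c * q < - 2 * p].
    set mm := Num.min g h.
    have mg : mm <= g by rewrite ge_min lexx.
    have mh : mm <= h by rewrite ge_min lexx orbT.
    have m0 : 0 < mm by rewrite lt_min gp hp.
    have [qz|qp] := eqVneq q 0.
      exists mm; split => //; rewrite qz mulr0; lra.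
    have qp' : 0 < q by rewrite lt_neqAle eq_sym qp q0.
    case: (lerP mm (- p / q)) => hm.
      exists mm; split => //.
      rewrite ler_pdivlMr // in hm. lra.
    exists (- p / q); split.
    + by rewrite divr_gt0 // oppr_gt0.
    + by rewrite ltW // (lt_le_trans hm).
    + by rewrite ltW // (lt_le_trans hm).
    + rewrite divfK ?gt_eqF //; lra.
  have := hF n m x y (1 - c * g^-1) (1 - c * h^-1).
  have := @key2 _ _ ip hip x y (T n x) (T m y) g h c.
  rewrite -/g -/h -/w -/p -/q => k2 hF2.
  have ha : 0 <= 1 - c * g^-1 <= 1.
    apply/andP; split; last by rewrite lerBlDr lerDl mulr_ge0 // ?invr_ge0 ltW.
    by rewrite subr_ge0 ler_pdivrMr // mul1r.
  have hb : 0 <= 1 - c * h^-1 <= 1.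
    apply/andP; split; last by rewrite lerBlDr lerDl mulr_ge0 // ?invr_ge0 ltW.
    by rewrite subr_ge0 ler_pdivrMr // mul1r.
  have e : (1 - (1 - c * g^-1)) * g = (1 - (1 - c * h^-1)) * h.
    have sub1 : forall a : R, 1 - (1 - a) = a by move=> a; ring.
    by rewrite !sub1 !divfK ?gt_eqF.
  move: (hF2 ha hb e).
  rewrite -(ler_pXn2r (n:=2)) // ?nnegrE ?normr_ge0 // k2 => hh.
  have E : c * (2 * p + c * q) = 2 * c * p + c ^+ 2 * q by ring.
  have : 0 <= c * (2 * p + c * q) by rewrite E; lra.
  rewrite pmulr_rge0 //; lra.
Qed.
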